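(* Let $\alpha,\beta:\mathbb{R}[x]\to\mathbb{R}$ be the linear functionals defined by $\alpha(1)=0$, $\alpha(x)=1$, $\alpha(x^n)=0$ for $n\ge2$, and $\beta(1)=1$, $\beta(x)=0$, $\beta(x^n)=0$ for $n\ge2$. Let $P(x)=x(x+1)(x-1)$, $R(x)=x^2-\tfrac14$, and $T[f]=\alpha(f)P+\beta(f)R$. Then $T$ is a hyperbolicity preserver.
   Context: A linear operator $T:\mathbb{R}[x]\to\mathbb{R}[x]$ is a hyperbolicity preserver if $T[p]$ has only real zeros whenever $p\in\mathbb{R}[x]$ has only real zeros. *)

(* Defs.v *)
(* Real numbers are modelled by an arbitrary real closed
   field R (rcfType); complex numbers by pairs (a, b) standing for a + b i. *)
From HB Require Import structures.
From mathcomp Require Import all_boot all_order all_algebra.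
Set Implicit Arguments. Unset Strict Implicit. Unset Printing Implicit Defensive.
Import Order.TTheory GRing.Theory Num.Theory.
Local Open Scope ring_scope.

(* Evaluation of a real polynomial at the complex number a + b i (Horner),
   returning (real part, imaginary part). *)
Definition ceval (R : rcfType) (p : {poly R}) (a b : R) : R * R :=
  foldr (fun c uv => (uv.1 * a - uv.2 * b + c, uv.1 * b + uv.2 * a))
        (0, 0) (polyseq p).

(* p has only real zeros (the zero polynomial is counted as hyperbolic,
   as is standard in the Polya-Schur / Borcea-Branden literature). *)
Definition hyperbolic (R : rcfType) (p : {poly R}) : Prop :=
  p = 0 \/ forall a b : R, ceval p a b = (0, 0) -> b = 0.

Definition hyperbolicity_preserver (R : rcfType) (T : {poly R} -> {poly R}) : Prop :=
  (forall (c : R) (p q : {poly R}), T (c *: p + q) = c *: T p + T q) /\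
  (forall p : {poly R}, hyperbolic p -> hyperbolic (T p)).

Definition alphaF (R : rcfType) (f : {poly R}) : R := f`_1.
Definition betaF (R : rcfType) (f : {poly R}) : R := f`_0.

Definition Ppoly (R : rcfType) : {poly R} := 'X * ('X + 1) * ('X - 1).
Definition Rpoly (R : rcfType) : {poly R} := 'X^2 - (4%:R)^-1%:P.

Definition Top (R : rcfType) (f : {poly R}) : {poly R} :=
  alphaF f *: Ppoly R + betaF f *: Rpoly R.

(* Main.v *)
Require Import Defs.
From HB Require Import structures.
From mathcomp Require Import all_boot all_order all_algebra.
From mathcomp Require Import ring lra.
Set Implicit Arguments. Unset Strict Implicit. Unset Printing Implicit Defensive.
Import Order.TTheory GRing.Theory Num.Theory.
Local Open Scope ring_scope.

Section S.
Variable R : rcfType.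

Definition stepF (u v : R) := fun (c : R) (uv : R * R) =>
  (uv.1 * u - uv.2 * v + c, uv.1 * v + uv.2 * u).

Lemma foldr_nseq0 (u v : R) k : foldr (stepF u v) (0, 0) (nseq k 0) = (0, 0).
Proof. elim: k => //= k ->; rewrite /stepF /=; congr (_, _); ring. Qed.

Lemma ceval4 (p : {poly R}) u v : (size p <= 4)%N ->
  ceval p u v = foldr (stepF u v) (0, 0) [:: p`_0; p`_1; p`_2; p`_3].
Proof.
move=> hs.
have -> : [:: p`_0; p`_1; p`_2; p`_3] = (polyseq p) ++ nseq (4 - size p) 0.
  apply: (@eq_from_nth _ 0).
    by rewrite size_cat size_nseq subnKC.
  move=> i; rewrite /= => hi.
  have -> : nth 0 [:: p`_0; p`_1; p`_2; p`_3] i = p`_i.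
    by case: i hi => [|[|[|[|]]]].
  rewrite nth_cat nth_nseq if_same.
  case: ifP => // /negbT; rewrite -leqNgt => hip.
  by rewrite nth_default.
rewrite foldr_cat foldr_nseq0 /ceval.
done.
Qed.

Lemma Top_expr (f : {poly R}) :
  Top f = (f`_1) *: ('X^3 - 'X) + (f`_0) *: ('X^2 - (4%:R)^-1%:P).
Proof.
rewrite /Top /alphaF /betaF /Ppoly /Rpoly; congr (_ *: _ + _).
by rewrite exprS expr2; ring.
Qed.

End S.

Theorem mainTheorem2 (R : rcfType) : hyperbolicity_preserver (@Top R).
Proof.
split.
  move=> c p q; rewrite /Top /alphaF /betaF !coefD !coefZ.
  move: (Ppoly R) (Rpoly R) => x y; by rewrite !scalerDl scalerDr !scalerA addrACA.
move=> f _.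
set a := f`_1; set b := f`_0.
have [/andP [/eqP a0 /eqP b0]|nab] := boolP ((a == 0) && (b == 0)).
  by left; rewrite /Top /alphaF /betaF -/a -/b a0 b0 !scale0r addr0.
right=> u v.
have hs : (size (Top f) <= 4)%N.
  rewrite Top_expr; apply/leq_sizeP => j hj.
  rewrite !(coefD, coefZ, coefN, coefXn, coefX, coefC).
  case: j hj => [|[|[|[|j]]]] // _; rewrite /=; ring.
have c0 : (Top f)`_0 = - (b / 4%:R).
  rewrite Top_expr !(coefD, coefZ, coefN, coefXn, coefX, coefC) /= -/a -/b. ring.
have c1 : (Top f)`_1 = - a.
  rewrite Top_expr !(coefD, coefZ, coefN, coefXn, coefX, coefC) /= -/a -/b. ring.
have c2 : (Top f)`_2 = b.
  rewrite Top_expr !(coefD, coefZ, coefN, coefXn, coefX, coefC) /= -/a -/b. ring.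
have c3 : (Top f)`_3 = a.
  rewrite Top_expr !(coefD, coefZ, coefN, coefXn, coefX, coefC) /= -/a -/b. ring.
rewrite (ceval4 _ _ hs) c0 c1 c2 c3 /stepF /= => -[E1 E2].
set Pr := u^+3 - 3%:R * u * v^+2 - u.
set Pi := 3%:R * u^+2 * v - v^+3 - v.
set Rr := u^+2 - v^+2 - 4%:R^-1.
set Ri := 2%:R * u * v.
have F1 : a * Pr + b * Rr = 0 by rewrite -E1 /Pr /Rr; ring.
have F2 : a * Pi + b * Ri = 0 by rewrite -E2 /Pi /Ri; ring.
have key : a * (v * (16%:R * (Rr^+2 + Ri^+2) + 12%:R * u^+2 + 3%:R + 12%:R * v^+2)) = 0.
  have -> : a * (v * (16%:R * (Rr^+2 + Ri^+2) + 12%:R * u^+2 + 3%:R + 12%:R * v^+2))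
     = 16%:R * (Rr * (a * Pi + b * Ri) - Ri * (a * Pr + b * Rr)).
    by rewrite /Rr /Ri /Pi /Pr; field.
  by rewrite F1 F2; ring.
have Kpos : 0 < 16%:R * (Rr^+2 + Ri^+2) + 12%:R * u^+2 + 3%:R + 12%:R * v^+2 :> R.
  have := sqr_ge0 Rr; have := sqr_ge0 Ri; have := sqr_ge0 u; have := sqr_ge0 v.
  rewrite !expr2; nra.
move/eqP: key; rewrite mulf_eq0 => /orP [/eqP a0 | ].
  have bn0 : b != 0 by move: nab; rewrite a0 eqxx.
  move: F1 F2; rewrite a0 !mul0r !add0r => /eqP; rewrite mulf_eq0 (negbTE bn0) /=.
  move=> /eqP hR /eqP; rewrite mulf_eq0 (negbTE bn0) /= /Ri => /eqP hI.
  move: hR; rewrite /Rr => hR.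
  move/eqP: hI; rewrite !mulf_eq0 pnatr_eq0 /= => /orP [/eqP u0|/eqP //].
  move: hR; rewrite u0 => hR.
  have : 0 <= v^+2 := sqr_ge0 v.
  have h4 : (0 : R) < 4%:R^-1 by rewrite invr_gt0 ltr0n.
  rewrite expr2 in hR *; nra.
rewrite mulf_eq0 => /orP [/eqP //|/eqP K0].
by move: Kpos; rewrite K0 ltxx.
Qed.
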